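(* Let $n\ge0$ and $\kappa\ge0$, and suppose the arc travel times are $t_a(v_a)=b_a(v_a)^n$ with $b_a>0$ for each $a\in\mathcal A$. Let $\bar{\mathbf v}\in\mathbf V$ satisfy $$\sum_{a\in\mathcal A}\lambda_at_a(\bar v_a)(v_a-\bar v_a)\ge0\qquad\text{for all }\mathbf v\in\mathbf V$$ for some constants $\lambda_a\in[\tfrac1{1+\kappa},1]$, and let $\bar{\mathbf f}\in\mathbf F$ be any path flow inducing $\bar{\mathbf v}$. Let $\hat{\mathbf f}^0\in\mathbf F_{1+\kappa}$ be a PRUE flow for the demands $(1+\kappa)Q_w$ and $\mathbf f^0\in\mathbf F$ a PRUE flow for the demands $Q_w$. Then $C(\bar{\mathbf f})\le C(\hat{\mathbf f}^0)$, and consequently $C(\bar{\mathbf f})\le(1+\kappa)^{n+1}C(\mathbf f^0)$.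
   Context: Let $G=(\mathcal N,\mathcal A)$ be a finite directed graph and $\mathcal W$ a finite set of OD pairs; each $w$ has demand $Q_w>0$ and a finite set $\mathcal P_w$ of paths from its origin to its destination; $\mathcal P=\bigcup_w\mathcal P_w$; $\delta^p_a=1$ if arc $a$ lies on path $p$, else $0$. $\mathbf F=\{\mathbf f\ge0:\sum_{p\in\mathcal P_w}f_p=Q_w\ \forall w\}$ and $\mathbf F_{1+\kappa}=\{(1+\kappa)\mathbf f:\mathbf f\in\mathbf F\}$ (the feasible flows when every demand is multiplied by $1+\kappa$). A path flow induces arc flows $v_a=\sum_p\delta^p_af_p$; $\mathbf V$ is the set of arc flows induced by $\mathbf F$. Path travel time $c_p(\mathbf f)=\sum_a\delta^p_at_a(v_a)$; total system travel time $C(\mathbf f)=\sum_pc_p(\mathbf f)f_p=\sum_at_a(v_a)v_a$. A feasible flow (in $\mathbf F$ or $\mathbf F_{1+\kappa}$) is a PRUE if for all $w$ and $p\in\mathcal P_w$, $f_p>0\implies c_p(\mathbf f)=\min_{p'\in\mathcal P_w}c_{p'}(\mathbf f)$. *)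

(* Defs.v *)
From HB Require Import structures.
From mathcomp Require Import all_boot all_order all_algebra.
From mathcomp Require Import reals exp.
Set Implicit Arguments. Unset Strict Implicit. Unset Printing Implicit Defensive.
Import Order.TTheory GRing.Theory Num.Theory.
Local Open Scope ring_scope.

Section Traffic.
Variable R : realType.
Variables (N A : finType) (src tgt : A -> N).
Variables (W P : finType) (orig dest : W -> N) (od : P -> W) (route : P -> seq A).

Definition is_path (o d : N) (s : seq A) : bool :=
  if s is a :: s' then
    [&& src a == o, path (fun a1 a2 => tgt a1 == src a2) a s',
        tgt (last a s') == d & uniq (src a :: map tgt s)]
  else false.

Definition delta (p : P) (a : A) : R := (a \in route p)%:R.

Variable Q : W -> R.

Definition inF (f : P -> R) : Prop :=
  (forall p, 0 <= f p) /\ (forall w, \sum_(p | od p == w) f p = Q w).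

Definition inFk (kappa : R) (fh : P -> R) : Prop :=
  exists f, inF f /\ fh = (fun p => (1 + kappa) * f p).

Definition arcflow (f : P -> R) (a : A) : R := \sum_p delta p a * f p.

Definition inV (v : A -> R) : Prop := exists f, inF f /\ v = arcflow f.

Variable t : A -> R -> R.

Definition pathcost (f : P -> R) (p : P) : R :=
  \sum_a delta p a * t a (arcflow f a).

Definition TSTT (f : P -> R) : R := \sum_p pathcost f p * f p.

Definition PRUE (f : P -> R) : Prop :=
  forall p, 0 < f p -> forall p', od p' = od p -> pathcost f p <= pathcost f p'.

End Traffic.

Definition bpr (R : realType) (A : Type) (b : A -> R) (n : R) (a : A) (x : R) : R :=
  b a * powR x n.

(* Main.v *)
Require Import Defs.
From HB Require Import structures.
From mathcomp Require Import all_boot all_order all_algebra.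
From mathcomp Require Import reals exp.
From mathcomp Require Import ring lra.
Import Order.TTheory GRing.Theory Num.Theory.
Local Open Scope ring_scope.

Section Helpers.
Variables (R : realType) (A P W : finType) (od : P -> W) (route : P -> seq A).

Lemma delta_ge0 p a : 0 <= (delta R route p a).
Proof. by rewrite /delta ler0n. Qed.

Lemma arcflow_ge0 (f : P -> R) a : (forall p, 0 <= f p) -> 0 <= arcflow route f a.
Proof. move=> hf; apply: sumr_ge0 => p _; exact: mulr_ge0 (delta_ge0 _ _) (hf p). Qed.

Lemma arcflow_scale (c : R) (f : P -> R) a :
  arcflow route (fun p => c * f p) a = c * arcflow route f a.
Proof. rewrite /arcflow mulr_sumr; apply: eq_bigr => p _; ring. Qed.

Lemma cross (t : A -> R -> R) (f g : P -> R) :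
  \sum_p pathcost route t f p * g p =
  \sum_a t a (arcflow route f a) * arcflow route g a.
Proof.
rewrite /pathcost; under eq_bigr do rewrite mulr_suml.
rewrite exchange_big; apply: eq_bigr => a _.
rewrite /arcflow mulr_sumr; apply: eq_bigr => p _; ring.
Qed.

Lemma TSTT_arc (t : A -> R -> R) (f : P -> R) :
  TSTT route t f = \sum_a t a (arcflow route f a) * arcflow route f a.
Proof. exact: cross. Qed.

Lemma Kineq (n x y : R) : 0 <= n -> 0 <= x -> 0 <= y ->
  (n + 1) * (powR x n * y) <= n * (powR x n * x) + powR y n * y.
Proof.
move=> n0 x0 y0.
have [->|nz] := eqVneq n 0.
  by rewrite !powRr0; lra.
have np : 0 < n by rewrite lt_neqAle eq_sym nz.
have n1 : 0 < n + 1 by lra.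
have h := @conjugate_powR R (powR x n) y ((n + 1) / n) (n + 1) (powR_ge0 _ _) y0
  (divr_gt0 n1 np) n1.
have e1 : ((n + 1) / n)^-1 + (n + 1)^-1 = 1.
  by field; rewrite ?gt_eqF.
have {h} := h e1.
rewrite -powRrM.
have -> : n * ((n + 1) / n) = n + 1 by field; rewrite gt_eqF.
rewrite powRD ?(gt_eqF n1) // powRD ?(gt_eqF n1) //.
rewrite !powRr1 // => h.
have := ler_wpM2l (ltW n1) h.
have -> : (n + 1) * (powR x n * x / ((n + 1) / n) + powR y n * y / (n + 1))
   = n * (powR x n * x) + powR y n * y.
  by field; rewrite ?gt_eqF.
by [].
Qed.

Lemma main_ineq (n : R) (w u y : A -> R) : 0 <= n ->
  (forall a, 0 <= w a) -> (forall a, 0 <= u a) -> (forall a, 0 <= y a) ->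
  \sum_a w a * powR (u a) n * u a <= \sum_a w a * powR (u a) n * y a ->
  \sum_a w a * powR (u a) n * u a <= \sum_a w a * powR (y a) n * y a.
Proof.
move=> n0 w0 u0 y0 hXY.
have hB : (n + 1) * \sum_a w a * powR (u a) n * y a <=
   n * \sum_a w a * powR (u a) n * u a + \sum_a w a * powR (y a) n * y a.
  rewrite !mulr_sumr -big_split /=; apply: ler_sum => a _.
  have := @Kineq n (u a) (y a) n0 (u0 a) (y0 a); have := w0 a.
  set P1 := powR (u a) n; set P2 := powR (y a) n => ha hk.
  have := ler_wpM2l ha hk.
  have -> : w a * ((n + 1) * (P1 * y a)) = (n + 1) * (w a * P1 * y a) by ring.
  have -> : w a * (n * (P1 * u a) + P2 * y a) = n * (w a * P1 * u a) + w a * P2 * y a by ring.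
  by [].
set X := \sum_a _ * _ * u a in hXY hB *.
set Y := \sum_a _ * _ * y a in hXY hB *.
set Z := \sum_a _ in hB *.
nra.
Qed.

Lemma ue_path (t : A -> R -> R) (f g : P -> R) :
  (forall p, 0 <= f p) -> (forall p, 0 <= g p) ->
  (forall w, \sum_(p | od p == w) f p = \sum_(p | od p == w) g p) ->
  (forall p, 0 <= pathcost route t f p) ->
  PRUE od route t f ->
  \sum_p pathcost route t f p * f p <= \sum_p pathcost route t f p * g p.
Proof.
move=> f0 g0 hd c0 hue.
rewrite (partition_big od predT) // [X in _ <= X](partition_big od predT) //=.
apply: ler_sum => w _.
case: (pickP (fun p => (od p == w) && (0 < f p))) => [p0 /andP[/eqP hw hp0] | hnone].
- set m := pathcost route t f p0.
  have -> : \sum_(p | od p == w) pathcost route t f p * f p =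
            \sum_(p | od p == w) m * f p.
    apply: eq_bigr => p /eqP hp.
    have := f0 p; rewrite le_eqVlt => /orP[/eqP <-|hpp]; first by rewrite !mulr0.
    congr (_ * _); apply/eqP; rewrite eq_le.
    rewrite hue //; last by rewrite hp hw.
    by rewrite /m hue // hw hp.
  rewrite -mulr_sumr hd mulr_sumr; apply: ler_sum => p /eqP hp.
  by apply: ler_wpM2r => //; rewrite /m hue // hp hw.
- have -> : \sum_(p | od p == w) pathcost route t f p * f p = 0.
    apply: big1 => p hp.
    have := hnone p; rewrite hp /= => /negbT; rewrite -leNgt => hle.
    have -> : f p = 0 by apply/eqP; rewrite eq_le hle f0.
    by rewrite mulr0.
  by apply: sumr_ge0 => p _; apply: mulr_ge0.
Qed.

End Helpers.

Theorem theorem1 (R : realType) (N A : finType) (src tgt : A -> N)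
  (W P : finType) (orig dest : W -> N) (od : P -> W) (route : P -> seq A)
  (Q : W -> R) (b : A -> R) (n kappa : R) (lambda : A -> R)
  (vbar : A -> R) (fbar fhat0 f0 : P -> R) :
  (forall p, is_path src tgt (orig (od p)) (dest (od p)) (route p)) ->
  (forall w, 0 < Q w) ->
  0 <= n -> 0 <= kappa ->
  (forall a, 0 < b a) ->
  (forall a, 1 / (1 + kappa) <= lambda a <= 1) ->
  inV od route Q vbar ->
  (forall v, inV od route Q v ->
     0 <= \sum_a lambda a * bpr b n a (vbar a) * (v a - vbar a)) ->
  inF od Q fbar -> arcflow route fbar = vbar ->
  inFk od Q kappa fhat0 -> PRUE od route (bpr b n) fhat0 ->
  inF od Q f0 -> PRUE od route (bpr b n) f0 ->
  TSTT route (bpr b n) fbar <= TSTT route (bpr b n) fhat0 /\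
  TSTT route (bpr b n) fbar <= powR (1 + kappa) (n + 1) * TSTT route (bpr b n) f0.
Proof.
move=> _ _ n0 k0 b0 hl _ hVI [fb0 fbd] hvbar [g [[g0 gd] ->]] hue1 [f00 f0d] _.
have k1 : 0 < 1 + kappa by lra.
set y := arcflow route g.
have y0 : forall a, 0 <= y a by move=> a; exact: arcflow_ge0.
have u0 : forall a, 0 <= vbar a by move=> a; rewrite -hvbar; exact: arcflow_ge0.
have P1 : TSTT route (bpr b n) fbar <= TSTT route (bpr b n) (fun p => (1 + kappa) * g p).
  rewrite !TSTT_arc hvbar.
  under [X in _ <= X]eq_bigr do rewrite arcflow_scale.
  rewrite /bpr.
  have hv := hVI y (ex_intro _ g (conj (conj g0 gd) erefl)).
  have hXY : \sum_a (lambda a * b a) * powR (vbar a) n * vbar a <=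
             \sum_a (lambda a * b a) * powR (vbar a) n * y a.
    rewrite -subr_ge0 -sumrB; apply: (le_trans hv); rewrite le_eqVlt; apply/orP; left.
    apply/eqP; apply: eq_bigr => a _; rewrite /bpr; ring.
  have hm := @main_ineq R A n (fun a => lambda a * b a) vbar y n0 (fun a => mulr_ge0 (le_trans _ (proj1 (andP (hl a)))) (ltW (b0 a)))
     u0 y0 hXY.
  have {hm} := hm (divr_ge0 ler01 (ltW k1)).
  move=> hm.
  apply: (@le_trans _ _ ((1 + kappa) * \sum_a (lambda a * b a) * powR (vbar a) n * vbar a)).
    rewrite mulr_sumr; apply: ler_sum => a _.
    have := hl a => /andP[hl1 hl2].
    have hl1' : 1 <= (1 + kappa) * lambda a.
      by rewrite -ler_pdivrMl // mulr1; rewrite div1r in hl1.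
    have := mulr_ge0 (mulr_ge0 (ltW (b0 a)) (powR_ge0 (vbar a) n)) (u0 a).
    nra.
  apply: (le_trans (ler_wpM2l (ltW k1) hm)).
  rewrite mulr_sumr; apply: ler_sum => a _.
  have := hl a => /andP[hl1 hl2].
  rewrite powRM ?(ltW k1) // .
  have hkn : 1 <= powR (1 + kappa) n.
    have k1' : 1 <= 1 + kappa by lra.
    by have := ler_powR k1' n0; rewrite powRr0.
  have := mulr_ge0 (mulr_ge0 (ltW (b0 a)) (powR_ge0 (y a) n)) (y0 a).
  have := b0 a.
  set Z := powR (y a) n * y a.
  have -> : b a * (powR (1 + kappa) n * powR (y a) n) * ((1 + kappa) * y a)
     = (1 + kappa) * powR (1 + kappa) n * (b a * Z) by rewrite /Z; ring.
  have -> : (1 + kappa) * (lambda a * b a * powR (y a) n * y a)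
     = (1 + kappa) * lambda a * (b a * Z) by rewrite /Z; ring.
  move=> hb hz.
  have : (1 + kappa) * lambda a * (b a * Z) <= (1 + kappa) * (b a * Z).
    have hz' : 0 <= b a * Z by rewrite /Z mulrA.
    rewrite -mulrA; apply: ler_wpM2l; first exact: ltW.
    by rewrite -[X in _ <= X]mul1r; apply: ler_wpM2r.
  have hC : 0 <= (1 + kappa) * (b a * Z).
    by apply: mulr_ge0; [exact: ltW | rewrite /Z mulrA].
  nra.
split => //.
apply: (le_trans P1).
have cost0 : forall (h : P -> R) p, 0 <= pathcost route (bpr b n) h p.
  move=> h p; apply: sumr_ge0 => a _; apply: mulr_ge0; first exact: delta_ge0.
  by apply: mulr_ge0; [exact: ltW | exact: powR_ge0].
have fh0 : forall p, 0 <= (1 + kappa) * g p by move=> p; apply: mulr_ge0 => //; exact: ltW.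
have ff0 : forall p, 0 <= (1 + kappa) * f0 p by move=> p; apply: mulr_ge0 => //; exact: ltW.
have := @ue_path R A P W od route (bpr b n) _ (fun p => (1 + kappa) * f0 p) fh0 ff0.
move=> H; have {H} := H _ (cost0 _) hue1.
rewrite -/(TSTT route (bpr b n) _) cross TSTT_arc /bpr => H.
have H2 : _ := H (fun w => ltac:(by rewrite -!mulr_sumr gd f0d)).
have := @main_ineq R A n b (arcflow route (fun p => (1 + kappa) * g p))
   (arcflow route (fun p => (1 + kappa) * f0 p)) n0 (fun a => ltW (b0 a))
   (fun a => @arcflow_ge0 R A P route _ a fh0) (fun a => @arcflow_ge0 R A P route _ a ff0) H2.
move=> H3.
rewrite TSTT_arc /bpr.
apply: (le_trans H3).
rewrite mulr_sumr le_eqVlt; apply/orP; left; apply/eqP.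
apply: eq_bigr => a _; rewrite !arcflow_scale.
rewrite powRM ?(ltW k1) ?arcflow_ge0 //.
rewrite powRD; last by rewrite (gt_eqF k1) implybT.
rewrite powRr1; last exact: ltW.
ring.
Qed.
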